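(* Let $n\ge2$, $0<\varepsilon<1$ and $s\ge\lambda\ge1$. Let $G$ be an $n$-vertex $(\varepsilon,s)$-expander and let $U\subseteq V(G)$ with $|U|\le 2n/3$. Then there is a set $U'\subseteq U$ with $|N_G(U')|\ge\lambda|U'|$ and $|U'|\ge\frac{\varepsilon|U|}{3\lambda(\log n)^2}$.
   Context: Logarithms are base 2. For $U\subseteq V(G)$, $N_G(U)$ is the set of vertices outside $U$ with a neighbour in $U$; $G-F$ is $G$ with edge set $F$ deleted. An $n$-vertex graph $G$ is an $(\varepsilon,s)$-expander if for every $U\subseteq V(G)$, $F\subseteq E(G)$ with $1\le|U|\le\frac23n$ and $|F|\le s|U|$ we have $|N_{G-F}(U)|\ge\varepsilon|U|/(\log n)^2$. *)

(* Defs.v *)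
From HB Require Import structures.
From mathcomp Require Import all_boot all_order all_algebra.
From mathcomp Require Import reals exp.
Set Implicit Arguments. Unset Strict Implicit. Unset Printing Implicit Defensive.
Import Order.TTheory GRing.Theory Num.Theory.
Local Open Scope ring_scope.

Definition log2 {R : realType} (x : R) : R := ln x / ln 2.

(* A simple graph on a finite vertex type T is a symmetric irreflexive
   relation e : rel T.  Its edges are the 2-element sets {x,y} with e x y. *)
Definition edges {T : finType} (e : rel T) : {set {set T}} :=
  [set [set x; y] | x in T, y in T & e x y].

Definition del_edges {T : finType} (e : rel T) (F : {set {set T}}) : rel T :=
  fun x y => e x y && ([set x; y] \notin F).

Definition nbhd {T : finType} (e : rel T) (U : {set T}) : {set T} :=
  [set v | (v \notin U) && [exists u in U, e u v]].

Definition expander {R : realType} {T : finType} (e : rel T) (eps s : R) : Prop :=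
  forall (U : {set T}) (F : {set {set T}}),
    (1 <= #|U|)%N ->
    (#|U|%:R <= 2 / 3 * #|T|%:R :> R) ->
    F \subset edges e ->
    (#|F|%:R <= s * #|U|%:R :> R) ->
    eps * #|U|%:R / (log2 (#|T|%:R : R)) ^+ 2 <= #|nbhd (del_edges e F) U|%:R.

(* Main.v *)
Require Import Defs.
From HB Require Import structures.
From mathcomp Require Import all_boot all_order all_algebra.
From mathcomp Require Import reals exp.
From mathcomp Require Import ring lra.
Import Order.TTheory GRing.Theory Num.Theory.
Local Open Scope ring_scope.

Lemma card_bigcup_le (I T : finType) (P : pred I) (A : I -> {set T}) :
  (#|\bigcup_(i | P i) A i| <= \sum_(i | P i) #|A i|)%N.
Proof.
apply: (big_ind2 (fun (S : {set T}) (n : nat) => #|S| <= n)%N).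
- by rewrite cards0.
- move=> S1 n1 S2 n2 h1 h2. apply: leq_trans (leq_card_setU S1 S2) _.
  exact: leq_add.
- by move=> i _.
Qed.

Lemma log2_ge1 (R : realType) (n : nat) : (2 <= n)%N -> 1 <= log2 (n%:R : R).
Proof.
move=> hn; rewrite /log2.
have h2 : 0 < ln (2 : R) by apply: ln_gt0; rewrite ltr1n.
rewrite ler_pdivlMr // mul1r ler_ln ?posrE ?ler_nat //.
by rewrite ltr0n; apply: leq_trans hn.
Qed.

Theorem mainTheorem15 (R : realType) (T : finType) (e : rel T)
    (e_sym : symmetric e) (e_irr : irreflexive e)
    (eps s lam : R) :
  (2 <= #|T|)%N ->
  0 < eps -> eps < 1 ->
  1 <= lam -> lam <= s ->
  expander e eps s ->
  forall U : {set T}, (#|U|%:R <= 2 / 3 * #|T|%:R :> R) ->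
  exists U' : {set T},
    [/\ U' \subset U,
        (lam * #|U'|%:R <= #|nbhd e U'|%:R :> R)
      & (eps * #|U|%:R / (3 * lam * (log2 (#|T|%:R : R)) ^+ 2) <= #|U'|%:R :> R)].
Proof.
move=> hn heps0 heps1 hlam hls hexp U hU.
set d := (log2 (#|T|%:R : R)) ^+ 2.
have hd1 : 1 <= d.
  have h := @log2_ge1 R _ hn; rewrite /d expr2.
  nra.
have hd0 : 0 < d by apply: lt_le_trans hd1.
pose N' (X : {set T}) := [set v | (v \notin U) && [exists u in X, e u v]].
pose P (X : {set T}) := (X \subset U) && (lam * #|X|%:R <= #|N' X|%:R).
have P0 : P set0 by rewrite /P sub0set cards0 mulr0 /=.
case: (@arg_maxnP _ set0 P (fun X : {set T} => #|X|) P0) => X /andP[hXU hXN] hmax.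
have hN'sub : N' X \subset nbhd e X.
  apply/subsetP => v; rewrite !inE => /andP[hvU ->]; rewrite andbT.
  by apply: contra hvU; apply: (subsetP hXU).
exists X; split => //.
  apply: le_trans hXN _; rewrite ler_nat; exact: subset_leq_card.
have h3l : 0 < 3 * lam * d.
  by apply: mulr_gt0 => //; apply: mulr_gt0 => //; apply: lt_le_trans hlam.
case: (set_0Vmem (U :\: X)) => [hW | [w hw]].
  have hUX : U = X.
    apply/eqP; rewrite eqEsubset hXU andbT.
    by rewrite -setD_eq0 hW.
  rewrite -hUX ler_pdivrMr //.
  have hu : 0 <= (#|U|%:R : R) by [].
  have hel : eps * #|U|%:R <= #|U|%:R by rewrite ler_piMl // ltW.
  have hl3 : (#|U|%:R : R) <= #|U|%:R * (3 * lam * d) by rewrite ler_peMr //; nra.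
  nra.
move: hw; rewrite inE => /andP[hwX hwU].
have hP1 : forall u, u \in U -> u \notin X -> ~~ P (u |: X).
  move=> u hu huX; apply/negP => hP.
  have := hmax _ hP; rewrite cardsU1 huX /=.
  by rewrite add1n ltnn.
have hNX : (#|N' X|%:R : R) < lam * (#|X|%:R + 1).
  rewrite ltNge; apply/negP => hge.
  apply: (negP (hP1 w hwU hwX)).
  rewrite /P subUset sub1set hwU hXU /= cardsU1 hwX /= add1n -addn1 natrD.
  apply: le_trans hge _; rewrite ler_nat; apply: subset_leq_card.
  apply/subsetP => v; rewrite !inE => /andP[-> /existsP [u /andP [hu huv]]].
  by apply/existsP; exists u; rewrite inE hu orbT.
pose B (u : T) := [set v | e u v && (v \notin U) && (v \notin N' X)].
have hB : forall u, u \in U -> (#|B u|%:R : R) <= lam.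
  move=> u hu; case: (boolP (u \in X)) => huX.
    have -> : B u = set0.
      apply/setP => v; rewrite !inE; apply/negP => /andP [/andP [huv hvU]].
      by rewrite hvU /=; apply/negP/negPn/existsP; exists u; rewrite huX.
    by rewrite cards0; apply: le_trans hlam.
  rewrite leNgt; apply/negP => hgt.
  apply: (negP (hP1 u hu huX)).
  rewrite /P subUset sub1set hu hXU /= cardsU1 huX /= add1n -addn1 natrD.
  have hsub : N' X :|: B u \subset N' (u |: X).
    apply/subsetP => v; rewrite !inE => /orP [/andP [-> /existsP [u' /andP [hu' huv]]]|].
      by apply/existsP; exists u'; rewrite inE hu' orbT.
    move=> /andP [/andP [huv ->]] _ /=.
    by apply/existsP; exists u; rewrite setU11.
  have hI : N' X :&: B u = set0.
    apply/setP => v; rewrite in_setI [v \in B u]in_set [v \in set0]in_set.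
    by case: (v \in N' X); rewrite ?andbF.
  have := subset_leq_card hsub; rewrite cardsU hI cards0 subn0 => hc.
  have hc' : (#|N' X|%:R + #|B u|%:R : R) <= #|N' (u |: X)|%:R.
    by rewrite -natrD ler_nat.
  rewrite mulrDr mulr1; apply: le_trans hc'.
  by apply: lerD => //; apply: ltW.
pose F := \bigcup_(u in U) [set [set u; v] | v in B u].
have hFe : F \subset edges e.
  apply/subsetP => f /bigcupP [u hu /imsetP [v hv ->]].
  move: hv; rewrite inE => /andP [/andP [huv _] _].
  by apply/imset2P; exists u v; rewrite ?inE.
have hFc : (#|F|%:R : R) <= s * #|U|%:R.
  have h1 : (#|F| <= \sum_(u in U) #|B u|)%N.
    apply: leq_trans (card_bigcup_le _ _ _ _) _.
    by apply: leq_sum => u _; apply: leq_imset_card.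
  apply: le_trans (_ : (\sum_(u in U) #|B u|)%:R <= _).
    by rewrite ler_nat.
  rewrite natr_sum.
  apply: le_trans (_ : \sum_(u in U) lam <= _).
    by apply: ler_sum => u hu; apply: hB.
  rewrite sumr_const -[lam *+ _]mulr_natr.
  by apply: ler_wpM2r.
have hU1 : (1 <= #|U|)%N by apply/card_gt0P; exists w.
have hE := hexp U F hU1 hU hFe hFc.
have hsub2 : nbhd (del_edges e F) U \subset N' X.
  apply/subsetP => v; rewrite !inE => /andP [hvU /existsP [u /andP [hu]]].
  rewrite /del_edges => /andP [huv hF].
  rewrite hvU /=; case: (boolP [exists u0 in X, e u0 v]) => // hN; exfalso.
  move/negP: hF; apply; apply/bigcupP; exists u => //.
  apply/imsetP; exists v => //.
  by rewrite inE huv hvU /= inE hvU /= hN.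
have hX1 : (1 <= #|X|)%N.
  rewrite card_gt0; apply/set0Pn.
  have hN0 : (0 : R) < #|N' X|%:R.
    apply: lt_le_trans (le_trans hE _); last by rewrite ler_nat subset_leq_card.
    apply: divr_gt0 => //; apply: mulr_gt0 => //; by rewrite ltr0n.
  move: hN0; rewrite ltr0n card_gt0 => /set0Pn [v].
  by rewrite inE => /andP [_ /existsP [u /andP [hu _]]]; exists u.
have hEN : eps * #|U|%:R / d <= #|N' X|%:R.
  by apply: le_trans hE _; rewrite ler_nat subset_leq_card.
have hx : (1 : R) <= #|X|%:R by rewrite ler1n.
have -> : eps * #|U|%:R / (3 * lam * d) = (eps * #|U|%:R / d) / (3 * lam).
  by field; apply/andP; split; apply/lt0r_neq0 => //; apply: lt_le_trans hlam.
rewrite ler_pdivrMr; last by apply: mulr_gt0 => //; apply: lt_le_trans hlam.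
nra.
Qed.
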